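(* Let $R$ be a unital commutative Hausdorff topological $\mathbb Q$-algebra with dense group of units which is locally $k_\omega$, let $E,F\in\mathrm{TopSMod}^{lko}_R$, let $U\subset E_\infty$ be DeWitt-open and let $f:U\to F_\infty$ be grounded and $\lambda^\infty$-smooth, with associated maps $f^{(k)}$. Then for all $x\in U$ and $y\in E_\infty^+$, $$f(x+y)=\sum_{k=0}^\infty\frac1{k!}\,f^{(k)}(x)(y,\dots,y)$$ (with $k$ arguments $y$ in the $k$-th term; only finitely many terms are nonzero).
   Context: $\lambda^n=R[\theta_1,\dots,\theta_n]$, $\lambda^\infty=R[\theta_i:i\in\mathbb N]$ Grassmann algebras on odd generators ($\lambda^n=\bigoplus_IR\theta_I$ product topology, $\lambda^\infty$ direct limit); $\varepsilon:\lambda\to R$ kills all $\theta_i$, $\lambda^{\infty+}=\ker\varepsilon$. For a Hausdorff graded topological $R$-module $E=E_0\oplus E_1$: $E\otimes\lambda^N=\prod_{|I|\le N}E\theta_I$, $E\otimes\lambda^\infty=\varinjlim E\otimes\lambda^N$ in Top, $E_\infty=(E\otimes\lambda^\infty)_0$, $E_\infty^+=(E\otimes\lambda^{\infty+})_0$, $\underline E(\lambda^\infty\theta_p)=(E\otimes\lambda^\infty\theta_p)_0$. $\mathrm{TopSMod}^{lko}_R$: such $E$ which are locally $k_\omega$ (Hausdorff, every point with an open neighbourhood which is a topological direct limit of an increasing sequence of compact sets). DeWitt topology on $E_\infty$ (resp. $E\otimes\lambda^\infty$): coarsest topology making $\mathrm{id}\otimes\varepsilon$ to $E_0$ (resp.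 $E$) continuous. $U_R=U\cap E_0$; $f$ grounded means $f(U_R)\subset F_0$. $\lambda^\infty$-smooth: $f$ is DeWitt-continuous, $f_R=f|_{U_R}:U_R\to F_0$ is $\mathcal C^\infty$ over $R$ (Bertram–Glöckner–Neeb: $g(x+tv)-g(x)=t\,g^{[1]}(x,v,t)$ with continuous $g^{[1]}$, iterated), and there are DeWitt-continuous maps $f^{(k)}:U\times(E\otimes\lambda^\infty)^k\to F\otimes\lambda^\infty$, $k\ge1$ (and $f^{(0)}=f$), such that: (i) for $x\in U$, $f^{(k)}(x)=f^{(k)}(x,\cdot)$ is even, $\lambda^\infty$-multilinear, supersymmetric ($f^{(k)}(x)(\dots,u,v,\dots)=(-1)^{|u||v|}f^{(k)}(x)(\dots,v,u,\dots)$ for homogeneous $u,v$), and $f^{(k)}(x)(E^k)\subset F$; (ii) $f^{(k)}$ extends $d^kf_R$; (iii) for $k\ge0$, $p\ge1$, $x\in U$, $a\in\underline E(\lambda^\infty\theta_p)$, $v_1,\dots,v_k\in E_\infty$: $f^{(k+1)}(x)(a,v_1,\dots,v_k)=(f^{(k)}(x+a)-f^{(k)}(x))(v_1,\dots,v_k)$. *)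

(* Defs.v *)
From HB Require Import structures.
From mathcomp Require Import all_boot all_order all_algebra finmap.
From mathcomp Require Import all_classical topology function_spaces.
Set Implicit Arguments. Unset Strict Implicit. Unset Printing Implicit Defensive.
Import GRing.Theory.
Local Open Scope classical_set_scope.
Local Open Scope ring_scope.

(* Carrier structures: a commutative unital ring with a topology, and an     *)
(* R-module with a topology.  The axioms (continuity of the operations, ...) *)
(* are imposed as explicit hypotheses below.                                 *)
HB.structure Definition FiltAddMagma := {M of Algebra.BaseAddMagma M & Filtered M M}.
HB.structure Definition TopNmod := {M of GRing.Nmodule M & Topological M}.
HB.structure Definition TopZmod := {M of GRing.Zmodule M & Topological M}.
#[short(type="topComUnitRingType")]
HB.structure Definition TopComUnitRing := {R of GRing.ComUnitRing R & Topological R}.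
#[short(type="topLmodType")]
HB.structure Definition TopLmodule (R : pzRingType) :=
  {M of GRing.Lmodule R M & Topological M}.

Definition top_ring (R : topComUnitRingType) : Prop :=
  [/\ continuous (fun p : R * R => p.1 + p.2),
      continuous (fun x : R => - x) &
      continuous (fun p : R * R => p.1 * p.2)].

(* A (unital) ring is a Q-algebra iff every positive integer is invertible. *)
Definition Q_algebra (R : topComUnitRingType) : Prop :=
  forall n : nat, (n.+1)%:R \is a @GRing.unit R.

Definition top_module (R : topComUnitRingType) (M : topLmodType R) : Prop :=
  continuous (fun p : M * M => p.1 + p.2) /\
  continuous (fun p : R * M => p.1 *: p.2).

Definition k_omega_open (T : topologicalType) (W : set T) : Prop :=
  open W /\
  exists K : nat -> set T,
    [/\ (forall n, compact (K n)),
        (forall n, K n `<=` K n.+1),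
        W = \bigcup_n K n &
        (forall A : set T, A `<=` W ->
           (forall n, exists B : set T, open B /\ A `&` K n = B `&` K n) ->
           open A)].

Definition locally_k_omega (T : topologicalType) : Prop :=
  hausdorff_space T /\ forall x : T, exists W : set T, W x /\ k_omega_open W.

(* E = E0 (+) E1 in TopSMod^lko_R : a Hausdorff graded topological R-module   *)
(* (topologically the product E0 * E1) which is locally k_omega.             *)
Definition TopSMod_lko (R : topComUnitRingType) (E0 E1 : topLmodType R) : Prop :=
  [/\ top_module E0, top_module E1 & locally_k_omega (E0 * E1)%type].

(* The odd generators theta_p are indexed by p : nat (theta_0, theta_1, ...; *)
(* i.e. the paper's theta_{p+1}).  A basis element theta_I, I a finite subset *)
(* of nat, is theta_{i1} ... theta_{im} with i1 < ... < im.                   *)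
(* An element of E (x) lambda^infty is a family (v I)_I of elements of E with *)
(* v I = 0 for all I not contained in {0,..,N-1} for some N, meaning         *)
(* sum_I (v I) theta_I.                                                       *)

Section Grassmann.
Variable R : topComUnitRingType.

(* families of coefficients (possibly not finitely supported) *)
Definition lam := {fset nat} -> R.
Definition superT (E0 E1 : topLmodType R) := {fset nat} -> (E0 * E1)%type.

Definition fin_supp (T : zmodType) (v : {fset nat} -> T) : Prop :=
  exists N : nat, forall I : {fset nat}, ~~ all (fun i => (i < N)%N) I -> v I = 0.

(* theta_I theta_J = sgn I J theta_{I u J} for disjoint I, J *)
Definition gsign (I J : {fset nat}) : R :=
  (-1) ^+ (\sum_(i <- I) \sum_(j <- J) (j < i)%N)%N.

Fixpoint fsubsets (s : seq nat) : seq {fset nat} :=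
  match s with
  | [::] => [:: fset0]
  | k :: s' => fsubsets s' ++ [seq fsetU (fset1 k) J | J <- fsubsets s']
  end.

Variables E0 E1 : topLmodType R.

(* right action of lambda on E (x) lambda:                                   *)
(* (sum_I v_I theta_I)(sum_J a_J theta_J) = sum_K (sum_{J c K} sgn(K\J,J)     *)
(*   a_J v_{K\J}) theta_K                                                     *)
Definition ract (v : superT E0 E1) (a : lam) : superT E0 E1 :=
  fun K => \sum_(J <- fsubsets K) (gsign (fsetD K J) J * a J) *: v (fsetD K J).

(* v is homogeneous of parity d: the coefficient of theta_I lies in         *)
(* E_{d + |I| mod 2}                                                          *)
Definition shom (d : bool) (v : superT E0 E1) : Prop :=
  forall I : {fset nat},
    if odd #|` I| (+) d then (v I).1 = 0 else (v I).2 = 0.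

Definition lhom (d : bool) (a : lam) : Prop :=
  forall I : {fset nat}, odd #|` I| != d -> a I = 0.

Definition Elam (v : superT E0 E1) : Prop := fin_supp v.
Definition Einf (v : superT E0 E1) : Prop := fin_supp v /\ shom false v.
Definition Einf_plus (v : superT E0 E1) : Prop := Einf v /\ v fset0 = 0.
Definition Etheta (p : nat) (v : superT E0 E1) : Prop :=
  Einf v /\ forall I : {fset nat}, p \notin I -> v I = 0.

Definition eps (v : superT E0 E1) : (E0 * E1)%type := v fset0.
(* E (resp. E_0) as the subspace of elements supported on theta_emptyset *)
Definition embE (e : (E0 * E1)%type) : superT E0 E1 :=
  fun I => if I == fset0 then e else 0.
Definition emb0 (e : E0) : superT E0 E1 := embE (e, 0).

End Grassmann.

(* Bertram--Gloeckner--Neeb differential calculus over the topological ring  *)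
(* R, for maps into a fixed topological R-module Y, on domains X given with  *)
(* their addition and scalar multiplication.                                 *)

Section BGN.
Variables (R : topComUnitRingType) (Y : topLmodType R).

Definition bgn_U1 (X : Type) (addX : X -> X -> X) (scX : R -> X -> X)
  (U : set X) : set (X * X * R)%type :=
  [set p | U p.1.1 /\ U (addX p.1.1 (scX p.2 p.1.2))].

Definition bgn_C1_witness (X : topologicalType) (addX : X -> X -> X)
  (scX : R -> X -> X) (U : set X) (g : X -> Y) (g1 : (X * X * R)%type -> Y) :=
  {within bgn_U1 addX scX U, continuous g1} /\
  forall (x v : X) (t : R), U x -> U (addX x (scX t v)) ->
    g (addX x (scX t v)) - g x = t *: g1 (x, v, t).

Fixpoint bgn_C (k : nat) (X : topologicalType) (addX : X -> X -> X)
  (scX : R -> X -> X) (U : set X) (g : X -> Y) {struct k} : Prop :=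
  match k with
  | 0 => {within U, continuous g}
  | k'.+1 => {within U, continuous g} /\
      exists g1 : (X * X * R)%type -> Y,
        bgn_C1_witness addX scX U g g1 /\
        @bgn_C k' ((X * X * R)%type : topologicalType)
          (fun p q => (addX p.1.1 q.1.1, addX p.1.2 q.1.2, p.2 + q.2))
          (fun r p => (scX r p.1.1, scX r p.1.2, r * p.2))
          (bgn_U1 addX scX U) g1
  end.

Variable X : topLmodType R.

Definition bgn_smooth (U : set X) (g : X -> Y) : Prop :=
  open U /\ forall k, bgn_C k +%R *:%R U g.

(* dg(x)(v) = g^[1](x, v, 0) (independent of the choice of g^[1] when the   *)
(* units of R are dense and Y is Hausdorff) *)
Definition bgn_d (U : set X) (g : X -> Y) (x v : X) : Y :=
  match pselect (exists g1, bgn_C1_witness +%R *:%R U g g1) with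
  | left H => (projT1 (cid H)) (x, v, 0)
  | right _ => 0
  end.

Fixpoint bgn_dk (U : set X) (g : X -> Y) (k : nat) : X -> ('I_k -> X) -> Y :=
  match k with
  | 0 => fun x _ => g x
  | k'.+1 => fun x (w : 'I_k'.+1 -> X) =>
      bgn_d U (fun z => @bgn_dk U g k' z (fun i : 'I_k' => w (widen_ord (leqnSn k') i)))
            x (w ord_max)
  end.

End BGN.

Section Smooth.
Variables (R : topComUnitRingType) (E0 E1 F0 F1 : topLmodType R).
Local Notation ET := (superT E0 E1).
Local Notation FT := (superT F0 F1).

Definition dewitt_open (U : set ET) : Prop :=
  exists V : set E0, open V /\ forall x, U x <-> (Einf x /\ V (eps x).1).

Definition dewitt_continuous (U : set ET) (f : ET -> FT) : Prop :=
  forall W : set F0, open W ->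
    exists V : set E0, open V /\
      forall x, U x -> (W (eps (f x)).1 <-> V (eps x).1).

Definition dewitt_continuous_k (k : nat) (U : set ET)
  (g : ET -> ('I_k -> ET) -> FT) : Prop :=
  forall W : set (F0 * F1)%type, open W ->
    exists V : set (E0 * {ptws 'I_k -> (E0 * E1)%type})%type, open V /\
      forall x (v : 'I_k -> ET), U x -> (forall i, Elam (v i)) ->
        (W (eps (g x v)) <-> V ((eps x).1, (fun i => eps (v i)))).

Definition upd (T : Type) (k : nat) (v : 'I_k -> T) (i : 'I_k) (w : T) :=
  fun j : 'I_k => if j == i then w else v j.

Definition cons_arg (T : Type) (k : nat) (a : T) (v : 'I_k -> T) : 'I_k.+1 -> T :=
  fun j => if unlift ord0 j is Some j' then v j' else a.

Definition lam_multilinear_even (k : nat) (h : ('I_k -> ET) -> FT) : Prop :=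
  [/\
      (forall (v : 'I_k -> ET) (d : 'I_k -> bool),
         (forall i, Elam (v i) /\ shom (d i) (v i)) ->
         shom (odd (\sum_i d i)) (h v)),
      (forall (v : 'I_k -> ET) (i : 'I_k) u w, (forall j, Elam (v j)) -> Elam u -> Elam w ->
         h (upd v i (u + w)) = h (upd v i u) + h (upd v i w)),
      (forall (v : 'I_k -> ET) (i : 'I_k) (a : lam R) (da : bool) (d : 'I_k -> bool),
         (forall j, Elam (v j)) -> fin_supp a -> lhom da a ->
         (forall j : 'I_k, (i < j)%N -> shom (d j) (v j)) ->
         h (upd v i (ract (v i) a)) =
         (-1) ^+ (da * \sum_(j : 'I_k | (i < j)%N) d j)%N *: ract (h v) a),
      (forall (v : 'I_k -> ET) (i j : 'I_k) (du dv : bool),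
         nat_of_ord j = i.+1 -> (forall l, Elam (v l)) ->
         shom du (v i) -> shom dv (v j) ->
         h (upd (upd v i (v j)) j (v i)) = (-1) ^+ (du && dv) *: h v) &
      (forall e : 'I_k -> (E0 * E1)%type, forall I, I != fset0 ->
         h (fun i => embE (e i)) I = 0)].

Definition grounded (U : set ET) (f : ET -> FT) : Prop :=
  forall x0 : E0, U (emb0 E1 x0) -> exists y0 : F0, f (emb0 E1 x0) = emb0 F1 y0.

Definition U_R (U : set ET) : set E0 := [set x0 | U (emb0 E1 x0)].
Definition f_R (f : ET -> FT) (x0 : E0) : F0 := (eps (f (emb0 E1 x0))).1.

Definition lam_smooth (U : set ET) (f : ET -> FT)
  (fk : forall k : nat, ET -> ('I_k -> ET) -> FT) : Prop :=
  [/\ (forall x, U x -> Einf (f x)),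
      dewitt_continuous U f &
      bgn_smooth (U_R U) (f_R f)] /\
  [/\
      (forall x (v : 'I_0 -> ET), U x -> fk 0 x v = f x),
      (forall k, (0 < k)%N ->
         [/\ (forall x (v : 'I_k -> ET), U x -> (forall i, Elam (v i)) ->
                Elam (fk k x v)),
             dewitt_continuous_k U (fk k) &
             forall x, U x -> lam_multilinear_even (fk k x)]),
      (forall k, (0 < k)%N -> forall (x0 : E0) (w : 'I_k -> E0), U_R U x0 ->
         fk k (emb0 E1 x0) (fun i => emb0 E1 (w i)) =
         emb0 F1 (bgn_dk (U_R U) (f_R f) x0 w)) &
      (forall k (p : nat) x a (v : 'I_k -> ET), U x -> Etheta p a ->
         (forall i, Einf (v i)) ->
         fk k.+1 x (cons_arg a v) = fk k (x + a) v - fk k x v)].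

End Smooth.

(* Main.v *)
Require Import Defs.
From HB Require Import structures.
From mathcomp Require Import all_boot all_order all_algebra finmap.
From mathcomp Require Import all_classical topology function_spaces.
From Stdlib Require Import Lia.
Import GRing.Theory.
Local Open Scope classical_set_scope.
Local Open Scope ring_scope.
Lemma fsubsets_sub (s : seq nat) J : J \in fsubsets s -> forall x, x \in J -> x \in s.
Proof.
elim: s J => [|k s IH] J /=.
  by rewrite inE => /eqP -> x; rewrite in_fset0.
rewrite mem_cat => /orP [/IH H x /H|]; first by rewrite in_cons orbC => ->.
move=> /mapP [J' /IH H ->] x; rewrite in_fsetU in_fset1 in_cons.
by case/orP => [->//|/H ->]; rewrite orbT.
Qed.

Lemma count_fset0_fsubsets (s : seq nat) :
  count (fun J => J == fset0) (fsubsets s) = 1%N.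
Proof.
elim: s => [|k s IH] /=; first by [].
rewrite count_cat IH count_map.
suff -> : count (preim (fsetU (fset1 k)) (fun J => J == fset0)) (fsubsets s) = 0%N by [].
apply/eqP; rewrite -leqn0 leqNgt -has_count; apply/hasPn => J _ /=.
apply/negP => /eqP /fsetP /(_ k); rewrite !inE eqxx.
by [].
Qed.

Lemma count_fset1_fsubsets (s : seq nat) p : uniq s ->
  count (fun J => J == fset1 p) (fsubsets s) = (p \in s).
Proof.
elim: s => [|k s IH] //=.
  move=> _; rewrite addn0; case: eqP => // /fsetP /(_ p).
  by rewrite !inE eqxx.
move=> /andP [ks us]; rewrite count_cat IH // count_map in_cons.
have -> : count (preim (fsetU (fset1 k)) (fun J => J == fset1 p)) (fsubsets s)
          = (p == k) :> nat.
  case: eqP => [->|pk].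
    transitivity 1%N; last by []. rewrite -(count_fset0_fsubsets s); apply: eq_in_count => J HJ /=.
    apply/eqP/eqP => [/fsetP E|->]; last by rewrite fsetU0.
    apply/fsetP => x; rewrite inE; apply/negbTE/negP => xJ.
    have := E x; rewrite !inE xJ orbT => /esym /eqP xk.
    by move: ks; rewrite -xk (@fsubsets_sub s J HJ x xJ).
  apply/eqP; rewrite -leqn0 leqNgt -has_count; apply/hasPn => J _ /=.
  apply/negP => /eqP /fsetP /(_ k); rewrite !inE eqxx /=.
  by move=> /esym /eqP => kp; apply: pk.
case: (p =P k) => [->|]; first by rewrite (negbTE ks).
by rewrite addn0.
Qed.

Section Main.
Variables (R : topComUnitRingType) (E0 E1 F0 F1 : topLmodType R).
Local Notation ET := (superT E0 E1).
Local Notation FT := (superT F0 F1).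

Definition tp (p : nat) : lam R := fun J => if J == fset1 p then 1 else 0.

Lemma ract_tp (G0 G1 : topLmodType R) (X : superT G0 G1) p K :
  ract X (tp p) K = if p \in K then gsign R (K `\` fset1 p)%fset (fset1 p) *: X (K `\` fset1 p)%fset else 0.
Proof.
rewrite /ract (eq_bigr (fun J => if J == fset1 p then
   gsign R (K `\` fset1 p)%fset (fset1 p) *: X (K `\` fset1 p)%fset else 0)); last first.
  by move=> J _; rewrite /tp; case: eqP => [->|_]; rewrite ?mulr1 ?mulr0 ?scale0r.
rewrite -big_mkcond big_const_seq /= count_fset1_fsubsets ?fset_uniq //.
by case: (p \in K) => /=; rewrite ?addr0.
Qed.

Lemma ract_tp_tp (G0 G1 : topLmodType R) (X : superT G0 G1) p :
  ract (ract X (tp p)) (tp p) = 0.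
Proof.
apply/funext => K; rewrite ract_tp; case: ifP => // _.
by rewrite ract_tp fsetD11 scaler0.
Qed.

Lemma fin_supp_tp p : fin_supp (tp p).
Proof.
exists p.+1 => I HI; rewrite /tp; case: (I =P fset1 p) => // EI; move: HI; rewrite EI => /negP [].
by apply/allP => x; rewrite in_fset1 => /eqP ->.
Qed.

Lemma lhom_tp p : lhom true (tp p).
Proof.
by move=> I; rewrite /tp; case: (I =P fset1 p) => [->|]; rewrite ?cardfs1.
Qed.

Lemma fin_supp_add (T : zmodType) (u v : {fset nat} -> T) :
  fin_supp u -> fin_supp v -> fin_supp (u + v).
Proof.
move=> [N1 H1] [N2 H2]; exists (maxn N1 N2) => I HI.
have HA : forall N, (N <= maxn N1 N2)%N -> ~~ all (fun i => (i < N)%N) I.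
  move=> N HN; apply: contra HI => /allP H; apply/allP => x /H xN.
  exact: leq_trans xN HN.
have -> : (u + v) I = u I + v I by [].
by rewrite H1 ?H2 ?addr0 // HA // ?leq_maxl ?leq_maxr.
Qed.

Lemma Einf_add (u v : ET) : Einf u -> Einf v -> Einf (u + v).
Proof.
move=> [fu hu] [fv hv]; split; first exact: fin_supp_add.
by move=> I; have := hu I; have := hv I; case: ifP => _ /= -> ->; rewrite addr0.
Qed.

Lemma Etheta_factor p (a : ET) : Etheta p a ->
  exists b : ET, fin_supp b /\ a = ract b (tp p).
Proof.
move=> [[[N HN] _] Ha].
exists (fun I => if p \in I then 0 else gsign R I (fset1 p) *: a (fset1 p `|` I)%fset).
split.
  exists N => I HI; case: ifP => // _; rewrite HN ?scaler0 //.
  apply: contra HI => /allP H; apply/allP => x xI; apply: H.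
  by rewrite in_fsetU xI orbT.
apply/funext => K; rewrite ract_tp; case: ifP => pK; last by rewrite Ha // pK.
by rewrite fsetD11 fsetD1K // /gsign signrZK.
Qed.
End Main.

Section Multi.
Variables (R : topComUnitRingType) (E0 E1 F0 F1 : topLmodType R).
Local Notation ET := (superT E0 E1).
Local Notation FT := (superT F0 F1).
Variables (n : nat) (h : ('I_n -> ET) -> FT).
Hypothesis Hh : lam_multilinear_even h.

Lemma upd_id (T : Type) (v : 'I_n -> T) i : upd v i (v i) = v.
Proof. by apply/funext => j; rewrite /upd; case: eqP => // ->. Qed.

Lemma upd_upd (T : Type) (v : 'I_n -> T) i x y : upd (upd v i x) i y = upd v i y.
Proof. by apply/funext => j; rewrite /upd; case: eqP. Qed.

Lemma upd_eq (T : Type) (v : 'I_n -> T) i x : upd v i x i = x.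
Proof. by rewrite /upd eqxx. Qed.

Lemma upd_neq (T : Type) (v : 'I_n -> T) i j x : j != i -> upd v i x j = v j.
Proof. by rewrite /upd => /negbTE ->. Qed.

Lemma h_hom p (a b : ET) (w : 'I_n -> ET) (j : 'I_n) :
  a = ract b (tp R p) -> (forall m, Elam (w m)) ->
  (forall m : 'I_n, (j < m)%N -> shom false (w m)) -> w j = b ->
  h (upd w j a) = ract (h w) (tp R p).
Proof.
move=> ab Hw Hs wj; case: Hh => _ _ Hhom _ _.
have := Hhom w j (tp R p) true (fun _ => false) Hw (fin_supp_tp R p) (lhom_tp R p) Hs.
by rewrite big1 // muln0 expr0 scale1r wj ab.
Qed.

Lemma two_a_zero p (a : ET) (v : 'I_n -> ET) (i l : 'I_n) :
  Etheta p a -> (i < l)%N -> v i = a -> v l = a -> (forall j, Einf (v j)) ->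
  h v = 0.
Proof.
move=> Ha il vi vl Hv.
have [b [fb ab]] := @Etheta_factor _ _ _ p a Ha.
have li : l != i by rewrite neq_ltn il orbT.
have HE1 : h v = ract (h (upd v i b)) (tp R p).
  rewrite -(@h_hom p a b (upd v i b) i ab).
  - by rewrite upd_upd -vi upd_id.
  - by move=> m; rewrite /upd; case: eqP => _ //; case: (Hv m).
  - move=> m im; rewrite upd_neq; first by case: (Hv m).
    by rewrite neq_ltn im orbT.
  - by rewrite upd_eq.
have HE2 : h (upd v i b) = ract (h (upd (upd v i b) l b)) (tp R p).
  rewrite -(@h_hom p a b (upd (upd v i b) l b) l ab).
  - by rewrite upd_upd -vl -(@upd_neq _ v i l b li) upd_id.
  - by move=> m; rewrite /upd; case: eqP => _ //; case: eqP => _ //; case: (Hv m).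
  - move=> m lm; rewrite upd_neq ?upd_neq; first by case: (Hv m).
    + by rewrite neq_ltn (ltn_trans il lm) orbT.
    + by rewrite neq_ltn lm orbT.
  - by rewrite upd_eq.
by rewrite HE1 HE2 ract_tp_tp.
Qed.

Lemma h_swap (v : 'I_n -> ET) (i j : 'I_n) :
  nat_of_ord j = i.+1 -> (forall m, Einf (v m)) ->
  h (upd (upd v i (v j)) j (v i)) = h v.
Proof.
move=> ji Hv; case: Hh => _ _ _ Hsw _.
rewrite (Hsw v i j false false ji) ?expr0 ?scale1r //.
- by move=> m; case: (Hv m).
- by case: (Hv i).
- by case: (Hv j).
Qed.

Lemma h_add (v : 'I_n -> ET) i (u w : ET) :
  (forall m, Einf (v m)) -> Einf u -> Einf w ->
  h (upd v i (u + w)) = h (upd v i u) + h (upd v i w).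
Proof.
move=> Hv Hu Hw; case: Hh => _ Hadd _ _ _.
by apply: Hadd => [m||]; [case: (Hv m)|case: Hu|case: Hw].
Qed.

Lemma h_expand p (y a : ET) : Einf y -> Etheta p a ->
  h (fun _ => y + a) =
  h (fun _ => y) + n%:R *: h (fun i : 'I_n => if nat_of_ord i == 0%N then a else y).
Proof.
move=> Hy Ha; have Ea : Einf a := Ha.1; have Eya := @Einf_add _ _ _ y a Hy Ea.
pose e m := fun i : 'I_n => if nat_of_ord i == m then a else y.
have Ee : forall m i, Einf (e m i) by move=> m i; rewrite /e; case: eqP.
pose w m := fun i : 'I_n => if (i < m)%N then y + a else y.
have Ew : forall m i, Einf (w m i) by move=> m i; rewrite /w; case: ifP.
pose q m m' := fun i : 'I_n => if nat_of_ord i == m then a else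
                              if (i < m')%N then y + a else y.
have Eq : forall m m' i, Einf (q m m' i).
  by move=> m m' i; rewrite /q; case: eqP => _ //; case: ifP.
have C : forall m, (m.+1 < n)%N -> h (e m.+1) = h (e m).
  move=> m mn; have mn' : (m < n)%N by exact: ltnW.
  rewrite -(@h_swap (e m) (Ordinal mn') (Ordinal mn)) //.
  congr h; apply/funext => l; rewrite /upd /e.
  case: l => l hl; rewrite -!(inj_eq val_inj) /=.
  by repeat (case: ifP => /eqP ? //); subst; lia.
have Ce : forall m, (m < n)%N -> h (e m) = h (e 0%N).
  elim=> [//|m IH] mn; rewrite C // IH //; exact: ltnW.
have B : forall m (mn : (m < n)%N) m', (m' <= m)%N -> h (q m m') = h (e m).
  move=> m mn; elim=> [_|m' IH m'm].
    by congr h; apply/funext => i; rewrite /q /e ltn0; case: eqP.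
  have m'n : (m' < n)%N by exact: ltn_trans m'm mn.
  have -> : q m m'.+1 = upd (q m m') (Ordinal m'n) (y + a).
    apply/funext => i; rewrite /upd /q; case: i => i hi; rewrite -(inj_eq val_inj) /=.
    case: (i =P m) => [->|im]; first by rewrite (gtn_eqF m'm).
    case: (i =P m') => [->|im']; first by rewrite ltnSn.
    by rewrite ltnS leq_eqVlt; move/eqP/negbTE: im' => ->.
  rewrite (h_add _ _ _ _ (Eq m m') Hy Ea).
  have -> : upd (q m m') (Ordinal m'n) y = q m m'.
    apply/funext => i; rewrite /upd /q; case: i => i hi; rewrite -(inj_eq val_inj) /=.
    case: (i =P m') => [->|//]; by rewrite (ltn_eqF m'm) ltnn.
  rewrite (@two_a_zero p a (upd (q m m') (Ordinal m'n) a) (Ordinal m'n) (Ordinal mn)) //.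
  - by rewrite addr0 IH // ltnW.
  - by rewrite upd_eq.
  - rewrite upd_neq /q /= ?eqxx //.
    by rewrite -(inj_eq val_inj) /= (gtn_eqF m'm).
  - move=> j; rewrite /upd; case: eqP => _ //.
have A : forall m, (m <= n)%N -> h (w m) = h (fun _ => y) + m%:R *: h (e 0%N).
  elim=> [_|m IH mn].
    by rewrite scale0r addr0; congr h; apply/funext => i; rewrite /w ltn0.
  have -> : w m.+1 = upd (w m) (Ordinal mn) (y + a).
    apply/funext => i; rewrite /upd /w; case: i => i hi; rewrite -(inj_eq val_inj) /=.
    case: (i =P m) => [->|im]; first by rewrite ltnSn.
    by rewrite ltnS leq_eqVlt; move/eqP/negbTE: im => ->.
  rewrite (h_add _ _ _ _ (Ew m) Hy Ea).
  have -> : upd (w m) (Ordinal mn) y = w m.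
    apply/funext => i; rewrite /upd /w; case: i => i hi; rewrite -(inj_eq val_inj) /=.
    by case: (i =P m) => [->|//]; rewrite ltnn.
  have -> : upd (w m) (Ordinal mn) a = q m m.
    apply/funext => i; rewrite /upd /w /q; case: i => i hi; rewrite -(inj_eq val_inj) /=.
    by case: (i =P m).
  rewrite IH ?(ltnW mn) // B // Ce //.
  by rewrite -addn1 natrD scalerDl scale1r addrA.
have -> : (fun _ => y + a) = w n.
  by apply/funext => i; rewrite /w ltn_ord.
by rewrite A.
Qed.

End Multi.

Definition supp_lt {T : zmodType} (n : nat) (v : {fset nat} -> T) :=
  forall I : {fset nat}, ~~ all (fun i => (i < n)%N) I -> v I = 0.

Lemma fact_unit (R : topComUnitRingType) (hR_Q : Q_algebra R) k :
  (k`!%:R : R) \is a GRing.unit.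
Proof. by rewrite -(prednK (fact_gt0 k)); apply: hR_Q. Qed.

Lemma coefS (R : topComUnitRingType) (hR_Q : Q_algebra R) k :
  ((k.+1)`!%:R : R)^-1 * (k.+1)%:R = (k`!%:R)^-1.
Proof.
by rewrite factS natrM invrM ?divrK ?fact_unit //; apply: hR_Q.
Qed.

Lemma bump0 i : bump 0 i = i.+1.
Proof. by rewrite /bump leq0n add1n. Qed.

Section Induction.
Variables (R : topComUnitRingType) (E0 E1 F0 F1 : topLmodType R).
Local Notation ET := (superT E0 E1).
Local Notation FT := (superT F0 F1).
Variables (U : set ET) (f : ET -> FT) (fk : forall k : nat, ET -> ('I_k -> ET) -> FT).
Hypothesis hR_Q : Q_algebra R.
Hypothesis UT : forall z a, U z -> Einf a -> a fset0 = 0 -> U (z + a).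
Hypothesis Hf0 : forall x (v : 'I_0 -> ET), U x -> fk 0 x v = f x.
Hypothesis Hml : forall k, (0 < k)%N -> forall x, U x -> lam_multilinear_even (fk k x).
Hypothesis Hiii : forall k (p : nat) x a (v : 'I_k -> ET), U x -> Etheta p a ->
         (forall i, Einf (v i)) ->
         fk k.+1 x (cons_arg a v) = fk k (x + a) v - fk k x v.

Lemma main_ind n : forall z, U z -> forall y : ET, Einf_plus y -> supp_lt n y ->
  (forall k, (n < k)%N -> fk k z (fun _ => y) = 0) /\
  f (z + y) = \sum_(k < n.+1) (k`!%:R)^-1 *: fk k z (fun _ => y).
Proof.
elim: n => [|n IH] z Uz y [Ey y0] Hs.
  have -> : y = 0.
    apply/funext => I; case: (I =P fset0) => [->//|IE]; apply: Hs.
    apply: contra_notN IE => /allP H; apply/fsetP => i; rewrite in_fset0.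
    by apply/negbTE/negP => /H.
  split.
    move=> k k0; have Hh := @Hml k k0 z Uz; case: Hh => _ Hadd _ _ _.
    have L0 : Elam (0 : ET) by exists 0%N.
    have H := Hadd (fun _ => 0) (Ordinal k0) 0 0 (fun _ => L0) L0 L0.
    have E : upd (fun _ : 'I_k => (0 : ET)) (Ordinal k0) (0 + 0) = (fun _ => 0).
      by apply/funext => j; rewrite /upd addr0; case: eqP.
    have E' : upd (fun _ : 'I_k => (0 : ET)) (Ordinal k0) 0 = (fun _ => 0).
      by apply/funext => j; rewrite /upd; case: eqP.
    rewrite E E' in H.
    have := congr1 (fun t => t - fk k z (fun _ => 0)) H.
    by rewrite /= subrr addrK.
  rewrite big_ord1 /= addr0 invr1 scale1r Hf0 //.
pose a : ET := fun I => if n \in I then y I else 0.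
pose y' : ET := fun I => if n \in I then 0 else y I.
have yE : y = y' + a.
  by apply/funext => I; rewrite /y' /a; have -> : (y' + a) I = y' I + a I by [];
     rewrite /y' /a; case: ifP; rewrite ?add0r ?addr0.
case: Ey => Fy Sy.
have Fa : fin_supp a.
  by exists n.+1 => I HI; rewrite /a Hs //; case: ifP.
have Fy' : fin_supp y'.
  by exists n.+1 => I HI; rewrite /y' Hs //; case: ifP.
have Ea : Einf a.
  split; first exact: Fa.
  move=> J; rewrite /a; have := Sy J; by case: (n \in J) => //= _; case: ifP.
have Ey' : Einf y'.
  split; first exact: Fy'.
  move=> J; rewrite /y'; have := Sy J; by case: (n \in J) => //= _; case: ifP.
have Ta : Etheta n a by split => // I nI; rewrite /a (negbTE nI).
have a0 : a fset0 = 0 by rewrite /a in_fset0.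
have y'0 : y' fset0 = 0 by rewrite /y' in_fset0.
have Sy' : supp_lt n y'.
  move=> I HI; rewrite /y'; case: ifP => // nI; apply: Hs.
  apply: contra HI => /allP H; apply/allP => i iI; have := H i iI.
  rewrite ltnS leq_eqVlt => /orP [/eqP ein|//].
  by move: nI; rewrite -ein iI.
have Uza : U (z + a) by exact: UT.
have [IHa1 IHa2] := IH (z + a) Uza y' (conj Ey' y'0) Sy'.
have [IHz1 IHz2] := IH z Uz y' (conj Ey' y'0) Sy'.
have iii : forall k, fk k (z + a) (fun _ => y') =
    fk k z (fun _ => y') + fk k.+1 z (cons_arg a (fun _ => y')).
  move=> k; rewrite (Hiii k n z a (fun _ => y') Uz Ta) //.
  by rewrite [RHS]addrCA subrr addr0.
have cons0 : forall k, cons_arg a (fun _ : 'I_k => y') =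
    (fun i : 'I_k.+1 => if nat_of_ord i == 0%N then a else y').
  move=> k; apply/funext => i; rewrite /cons_arg.
  by case: unliftP => [j ->|->].
have expand : forall k, fk k.+1 z (fun _ => y) =
    fk k.+1 z (fun _ => y') + k.+1%:R *: fk k.+1 z (cons_arg a (fun _ => y')).
  move=> k; rewrite yE cons0.
  exact: (@h_expand _ _ _ _ _ _ _ (@Hml k.+1 (ltn0Sn k) z Uz) n y' a Ey' Ta).
split.
  case=> [//|k] nk; rewrite expand IHz1 ?(ltnW nk) //.
  rewrite (Hiii k n z a (fun _ => y') Uz Ta) // IHa1 // IHz1 //.
  by rewrite subrr scaler0 addr0.
have zy : z + y = (z + a) + y' by rewrite yE (addrC y') addrA.
rewrite zy IHa2.
under eq_bigr => k _ do rewrite iii scalerDr.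
rewrite big_split /= big_ord_recl /= [in RHS]big_ord_recl /= !Hf0 //.
under [in RHS]eq_bigr => k _ do rewrite bump0 expand scalerDr scalerA (coefS _ hR_Q).
rewrite [in RHS]big_split /= [X in _ = _ + (X + _)]big_ord_recr /= IHz1 // scaler0 addr0.
under eq_bigr => k _ do rewrite bump0.
by rewrite addrA.
Qed.
End Induction.

Theorem proposition4p5 (R : topComUnitRingType) (E0 E1 F0 F1 : topLmodType R)
  (hR_top : top_ring R) (hR_T2 : hausdorff_space R) (hR_Q : Q_algebra R)
  (hR_units : dense [set r : R | r \is a GRing.unit])
  (hR_lko : locally_k_omega R)
  (hE : TopSMod_lko E0 E1) (hF : TopSMod_lko F0 F1)
  (U : set (superT E0 E1)) (hU : dewitt_open U)
  (f : superT E0 E1 -> superT F0 F1)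
  (fk : forall k : nat, superT E0 E1 -> ('I_k -> superT E0 E1) -> superT F0 F1)
  (hf_ground : grounded U f) (hf_smooth : lam_smooth U f fk) :
  forall x y : superT E0 E1, U x -> Einf_plus y ->
    exists N : nat,
      (forall k : nat, (N <= k)%N -> fk k x (fun _ => y) = 0) /\
      f (x + y) = \sum_(k < N) (k`!%:R)^-1 *: fk k x (fun _ => y).
Proof.
move=> x y Ux [Ey y0].
case: hf_smooth => _ [Hf0 Hfk _ Hiii].
have UT : forall z a, U z -> Einf a -> a fset0 = 0 -> U (z + a).
  case: hU => V [_ HV] z a Uz Ea a0.
  apply/HV; case/HV: Uz => Ez Vz; split; first exact: Einf_add.
  rewrite /eps; have -> : (z + a) fset0 = z fset0 + a fset0 by [].
  by rewrite a0 addr0.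
have Hml : forall k, (0 < k)%N -> forall x, U x -> lam_multilinear_even (fk k x).
  by move=> k k0 z Uz; case: (Hfk k k0) => _ _ /(_ z Uz).
case: (Ey) => [[N HN] _].
have [H1 H2] := @main_ind R E0 E1 F0 F1 U f fk hR_Q UT Hf0 Hml Hiii N x Ux y (conj Ey y0) HN.
by exists N.+1; split.
Qed.
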